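(* For all $n\ge2$, the number of permutations in $\mathcal{S}_n$ avoiding each of $1243$, $2143$ and $231$ equals $(n+2)2^{n-3}$.
   Context: A permutation $\pi\in\mathcal{S}_n$ avoids $\tau\in\mathcal{S}_k$ if there are no indices $i_1<\dots<i_k$ with $\pi_{i_1}\cdots\pi_{i_k}$ in the same relative order as $\tau_1\cdots\tau_k$. *)

(* Defs.v *)
From mathcomp Require Import all_boot all_order all_algebra all_fingroup.
Set Implicit Arguments. Unset Strict Implicit. Unset Printing Implicit Defensive.

(* A pattern tau in S_k is given in one-line notation as a list of naturals
   tau_1 ... tau_k (a permutation of 1..k).
   pi : 'S_n contains tau if there are indices i_1 < ... < i_k such that
   pi(i_1) ... pi(i_k) is in the same relative order as tau_1 ... tau_k. *)
Definition occurrence n (pi : 'S_n) (tau : seq nat) (f : 'I_(size tau) -> 'I_n) : bool :=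
  [forall a : 'I_(size tau), forall b : 'I_(size tau),
     ((a < b)%N ==> (f a < f b)%N) &&
     ((pi (f a) < pi (f b))%N == (nth 0%N tau a < nth 0%N tau b)%N)].

Definition contains n (pi : 'S_n) (tau : seq nat) : bool :=
  [exists f : {ffun 'I_(size tau) -> 'I_n}, @occurrence n pi tau f].

Definition avoids n (pi : 'S_n) (tau : seq nat) : bool := ~~ contains pi tau.

(* Main.v *)
Require Import Defs.
From mathcomp Require Import all_boot all_order all_algebra all_fingroup.
From mathcomp Require Import zify ring lra.
Set Implicit Arguments. Unset Strict Implicit.


Fixpoint subs (w : seq nat) : seq (seq nat) :=
  if w is x :: w' then [seq x :: t | t <- subs w'] ++ subs w' else [:: [::]].

Lemma mem_subs t w : (t \in subs w) = subseq t w.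
Proof.
elim: w t => [|x w IH] [|y t] //=.
- by rewrite mem_cat IH sub0seq orbT.
- rewrite mem_cat IH; case: eqP => [->|ne].
  + have cinj : injective (cons x) by move=> a b [].
    rewrite (mem_map cinj) IH.
    apply/orP/idP; last by move=> ->; left.
    case=> // h; apply: subseq_trans h; exact: subseq_cons.
  + suff -> : (y :: t \in [seq x :: t0 | t0 <- subs w]) = false by [].
    by apply/mapP => -[u _ [/ne]].
Qed.

Definition iso (t p : seq nat) : bool := (size t == size p) &&
  all (fun i => all (fun j => (nth 0 t i < nth 0 t j) == (nth 0 p i < nth 0 p j))
     (iota 0 (size p))) (iota 0 (size p)).

Definition cw (w p : seq nat) : bool := has (fun t => iso t p) (subs w).

Lemma isoP t p : reflect (size t = size p /\ forall i j, i < size p -> j < size p ->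
   (nth 0 t i < nth 0 t j) = (nth 0 p i < nth 0 p j)) (iso t p).
Proof.
apply: (iffP andP) => [[/eqP st /allP H]|[st H]]; split => //.
- move=> i j ilt jlt.
  have := H i; rewrite mem_iota add0n ilt leq0n.
  move=> /(_ isT) /allP /(_ j).
  by rewrite mem_iota add0n jlt leq0n => /(_ isT) /eqP.
- by rewrite st.
- apply/allP => i; rewrite mem_iota => /andP [_ ilt]; apply/allP => j;
  rewrite mem_iota => /andP [_ jlt]; by rewrite H.
Qed.

Lemma cwP w p : reflect (exists2 t, subseq t w & iso t p) (cw w p).
Proof.
apply: (iffP hasP) => [[t]|[t]]; rewrite ?mem_subs => h1 h2; by exists t; rewrite ?mem_subs.
Qed.

Lemma iso_trans t p q : iso t p -> iso p q -> iso t q.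
Proof.
move=> /isoP [s1 H1] /isoP [s2 H2]; apply/isoP; split; first by rewrite s1.
move=> i j il jl; rewrite H1 ?s2 //; exact: H2.
Qed.

Lemma cw_iso w p q : iso p q -> cw w p -> cw w q.
Proof. move=> h /cwP [t ts tp]; apply/cwP; exists t => //; exact: iso_trans h. Qed.

Lemma cw_sub w1 w2 p : subseq w1 w2 -> cw w1 p -> cw w2 p.
Proof. move=> h /cwP [t ts tp]; apply/cwP; exists t => //; exact: subseq_trans h. Qed.

Lemma iso_cons x t a p : iso (x :: t) (a :: p) -> iso t p /\
  forall j, j < size p -> (x < nth 0 t j) = (a < nth 0 p j) /\ (nth 0 t j < x) = (nth 0 p j < a).
Proof.
move=> /isoP [/= [st] H]; split.
- apply/isoP; split => // i j il jl; exact: (H i.+1 j.+1).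
- move=> j jl; split; [exact: (H 0 j.+1) | exact: (H j.+1 0)].
Qed.

Lemma iso_cons_intro x t a p : iso t p ->
  (forall j, j < size p -> (x < nth 0 t j) = (a < nth 0 p j) /\ (nth 0 t j < x) = (nth 0 p j < a)) ->
  iso (x :: t) (a :: p).
Proof.
move=> /isoP [st H] H2; apply/isoP; split; first by rewrite /= st.
move=> [|i] [|j] //= il jl; rewrite ?ltnn //.
- exact: (proj1 (H2 j jl)).
- exact: (proj2 (H2 i il)).
- exact: H.
Qed.

Lemma cw_drop w a p : cw w (a :: p) -> cw w p.
Proof.
move=> /cwP [[|y t] ts /[dup] tp /isoP [//= _ _]].
move/iso_cons: tp => [tp _]; apply/cwP; exists t => //.
apply: subseq_trans ts; exact: subseq_cons.
Qed.

Lemma cw_cons_gen x s p : cw (x :: s) p -> cw s p \/ exists2 t, subseq t s & iso (x :: t) p.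
Proof.
move=> /cwP [[|y t] ts tp].
- by left; apply/cwP; exists [::]; rewrite ?sub0seq.
- move: ts => /=; case: eqP => [<-|_] ts; [right; by exists t | left; apply/cwP; by exists (y :: t)].
Qed.

Lemma cw_cons_max x s p : (forall y, y \in s -> y < x) ->
  (exists2 j, j < size p & nth 0 p 0 < nth 0 p j) -> cw (x :: s) p -> cw s p.
Proof.
move=> Hs [j jl pj] /cw_cons_gen [//|[t ts tp]]; exfalso.
case: p jl pj tp => [//|a p] /= jl pj tp.
case: j jl pj => [|j] /=; first by rewrite ltnn.
move=> jl pj; move/iso_cons: tp => [/isoP [st _] /(_ j jl) [e _]].
have : nth 0 t j \in s by apply: (mem_subseq ts); apply: mem_nth; rewrite st.
move/Hs; rewrite ltnNge => /negP; apply; apply: ltnW; by rewrite e.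
Qed.

Lemma cw_cons_min x s p : (forall y, y \in s -> x < y) ->
  (exists2 j, j < size p & nth 0 p j < nth 0 p 0) -> cw (x :: s) p -> cw s p.
Proof.
move=> Hs [j jl pj] /cw_cons_gen [//|[t ts tp]]; exfalso.
case: p jl pj tp => [//|a p] /= jl pj tp.
case: j jl pj => [|j] /=; first by rewrite ltnn.
move=> jl pj; move/iso_cons: tp => [/isoP [st _] /(_ j jl) [_ e]].
have : nth 0 t j \in s by apply: (mem_subseq ts); apply: mem_nth; rewrite st.
move/Hs; rewrite ltnNge => /negP; apply; apply: ltnW; by rewrite e.
Qed.


Lemma cw_rcons_gen x s p : cw (rcons s x) p -> cw s p \/ exists2 t, subseq t s & iso (rcons t x) p.
Proof.
move=> /cwP [t ts tp]; case/lastP: t ts tp => [|t z] ts tp.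
- by left; apply/cwP; exists [::]; rewrite ?sub0seq.
- move: ts; rewrite -subseq_rev !rev_rcons /=; case: eqP => [<-|_] ts.
  + by right; exists t; rewrite // -subseq_rev.
  + by left; apply/cwP; exists (rcons t z); rewrite // -subseq_rev rev_rcons.
Qed.

Lemma cw_rcons_max x s p : (forall y, y \in s -> y < x) ->
  (exists2 j, j < size p & nth 0 p (size p).-1 < nth 0 p j) -> cw (rcons s x) p -> cw s p.
Proof.
move=> Hs [j jl pj] /cw_rcons_gen [//|[t ts /isoP [st H]]]; exfalso.
rewrite size_rcons in st.
have jt : j < size t.
  rewrite ltn_neqAle -ltnS st jl andbT; apply/eqP => e; move: pj; by rewrite -st e ltnn.
have tl : size t < size p by rewrite -st.
move: pj; rewrite -st /= => pj; have := H _ _ tl jl; rewrite pj !nth_rcons ltnn eqxx jt.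
have : nth 0 t j \in s by apply: (mem_subseq ts); apply: mem_nth.
move/Hs; rewrite ltnNge => /negP nh /ltnW; exact: nh.
Qed.

Definition P w := [&& ~~ cw w [:: 1;2;4;3], ~~ cw w [:: 2;1;4;3] & ~~ cw w [:: 2;3;1]].
Definition Q w := ~~ cw w [:: 1;3;2] && ~~ cw w [:: 2;3;1].

Lemma P_sub w1 w2 : subseq w1 w2 -> P w2 -> P w1.
Proof.
move=> h /and3P [h1 h2 h3]; apply/and3P; split;
  [exact: contra (cw_sub h) h1 | exact: contra (cw_sub h) h2 | exact: contra (cw_sub h) h3].
Qed.

Lemma Q_sub w1 w2 : subseq w1 w2 -> Q w2 -> Q w1.
Proof.
move=> h /andP [h1 h2]; apply/andP; split;
  [exact: contra (cw_sub h) h1 | exact: contra (cw_sub h) h2].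
Qed.

Lemma P_rcons a M : (forall y, y \in a -> y < M) -> P a -> P (rcons a M).
Proof.
move=> H /and3P [h1 h2 h3]; apply/and3P; split.
- apply: contra h1; apply: cw_rcons_max H _; by exists 2.
- apply: contra h2; apply: cw_rcons_max H _; by exists 2.
- apply: contra h3; apply: cw_rcons_max H _; by exists 0.
Qed.

Lemma P_cons a M : (forall y, y \in a -> y < M) -> P a -> P (M :: a).
Proof.
move=> H /and3P [h1 h2 h3]; apply/and3P; split.
- apply: contra h1; apply: cw_cons_max H _; by exists 2.
- apply: contra h2; apply: cw_cons_max H _; by exists 2.
- apply: contra h3; apply: cw_cons_max H _; by exists 1.
Qed.

Lemma Q_rcons a M : (forall y, y \in a -> y < M) -> Q a -> Q (rcons a M).
Proof.
move=> H /andP [h1 h2]; apply/andP; split.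
- apply: contra h1; apply: cw_rcons_max H _; by exists 1.
- apply: contra h2; apply: cw_rcons_max H _; by exists 0.
Qed.

Lemma Q_cons a M : (forall y, y \in a -> y < M) -> Q a -> Q (M :: a).
Proof.
move=> H /andP [h1 h2]; apply/andP; split.
- apply: contra h1; apply: cw_cons_max H _; by exists 1.
- apply: contra h2; apply: cw_cons_max H _; by exists 1.
Qed.

Lemma P_third x M b : Q b -> (forall y, y \in b -> x < y < M) -> x < M -> P (x :: M :: b).
Proof.
move=> /andP [q1 q2] H xM.
have HM : forall y, y \in b -> y < M by move=> y /H /andP [].
have Hx : forall y, y \in M :: b -> x < y.
  by move=> y; rewrite inE => /orP [/eqP -> //| /H /andP []].
have i1 : iso [:: 2; 4; 3] [:: 1; 3; 2] by [].
have i2 : iso [:: 1; 4; 3] [:: 1; 3; 2] by [].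
apply/and3P; split; apply/negP.
- move=> /cw_cons_gen [h|[t ts /iso_cons [tp _]]].
  + have h2 := cw_cons_max HM (ex_intro2 _ _ 1 isT isT : exists2 j, j < size [:: 1;2;4;3] & _) h.
    by move/negP: q1; apply; apply: cw_iso i1 (cw_drop h2).
  + have h1 : cw (M :: b) [:: 2; 4; 3] by apply/cwP; exists t.
    have h2 := cw_cons_max HM (ex_intro2 _ _ 1 isT isT : exists2 j, j < size [:: 2;4;3] & _) h1.
    by move/negP: q1; apply; apply: cw_iso i1 h2.
- move=> h.
  have h1 := cw_cons_min Hx (ex_intro2 _ _ 1 isT isT : exists2 j, j < size [:: 2;1;4;3] & _) h.
  have h2 := cw_cons_max HM (ex_intro2 _ _ 2 isT isT : exists2 j, j < size [:: 2;1;4;3] & _) h1.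
  by move/negP: q1; apply; apply: cw_iso i2 (cw_drop h2).
- move=> h.
  have h1 := cw_cons_min Hx (ex_intro2 _ _ 2 isT isT : exists2 j, j < size [:: 2;3;1] & _) h.
  have h2 := cw_cons_max HM (ex_intro2 _ _ 1 isT isT : exists2 j, j < size [:: 2;3;1] & _) h1.
  by move/negP: q2.
Qed.


Ltac isot := apply/isoP; split => // -[|[|[|[|i]]]] [|[|[|[|j]]]] //= _ _; lia.

Lemma iso_231 a b c : c < a -> a < b -> iso [:: a; b; c] [:: 2; 3; 1].
Proof. move=> h1 h2; isot. Qed.
Lemma iso_132 a b c : a < c -> c < b -> iso [:: a; b; c] [:: 1; 3; 2].
Proof. move=> h1 h2; isot. Qed.
Lemma iso_1243 a b c d : a < b -> b < d -> d < c -> iso [:: a; b; c; d] [:: 1; 2; 4; 3].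
Proof. move=> h1 h2 h3; isot. Qed.
Lemma iso_2143 a b c d : b < a -> a < d -> d < c -> iso [:: a; b; c; d] [:: 2; 1; 4; 3].
Proof. move=> h1 h2 h3; isot. Qed.

Lemma no_middle a1 a2 r1 r2 y M : P (a1 :: a2 :: r1 ++ M :: r2) -> y \in r2 ->
  uniq (a1 :: a2 :: r1 ++ M :: r2) -> a1 < M -> a2 < M -> y < M -> False.
Proof.
move=> /and3P [p1 p2 p3] yr U h1 h2 h3.
move: (U) => /= /andP [/negP U1 /andP [/negP U2 _]].
have n12 : a1 != a2 by apply/eqP => e; apply: U1; rewrite e mem_head.
have n1y : a1 != y by apply/eqP => e; apply: U1; rewrite e !in_cons mem_cat in_cons yr !orbT.
have n2y : a2 != y by apply/eqP => e; apply: U2; rewrite e mem_cat in_cons yr !orbT.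
pose s := a1 :: a2 :: r1 ++ M :: r2.
have s4 : subseq [:: a1; a2; M; y] s.
  rewrite /s /= !eqxx -[ [:: M; y] ]cat0s; apply: cat_subseq; first exact: sub0seq.
  by rewrite /= eqxx sub1seq.
have s3a : subseq [:: a1; M; y] s.
  by apply: subseq_trans s4; apply/subseqP; exists [:: true; false; true; true].
have s3b : subseq [:: a2; M; y] s.
  by apply: subseq_trans s4; apply/subseqP; exists [:: false; true; true; true].
case: (ltngtP a1 y) => [ay|ya|e]; last by rewrite e eqxx in n1y.
- case: (ltngtP a2 y) => [by_|yb|e]; last by rewrite e eqxx in n2y.
  + case: (ltngtP a1 a2) => [ab|ba|e]; last by rewrite e eqxx in n12.
    * by move/negP: p1; apply; apply/cwP; exists [:: a1; a2; M; y] => //; exact: iso_1243.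
    * by move/negP: p2; apply; apply/cwP; exists [:: a1; a2; M; y] => //; exact: iso_2143.
  + by move/negP: p3; apply; apply/cwP; exists [:: a2; M; y] => //; exact: iso_231.
- by move/negP: p3; apply; apply/cwP; exists [:: a1; M; y] => //; exact: iso_231.
Qed.

Lemma Q_no_middle x r1 r2 y M : Q (x :: r1 ++ M :: r2) -> y \in r2 ->
  uniq (x :: r1 ++ M :: r2) -> x < M -> y < M -> False.
Proof.
move=> /andP [p1 p2] yr U h1 h3.
move: (U) => /= /andP [/negP U1 _].
have n1y : x != y by apply/eqP => e; apply: U1; rewrite e mem_cat in_cons yr !orbT.
pose s := x :: r1 ++ M :: r2.
have s3 : subseq [:: x; M; y] s.
  rewrite /s /= !eqxx -[ [:: M; y] ]cat0s; apply: cat_subseq; first exact: sub0seq.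
  by rewrite /= eqxx sub1seq.
case: (ltngtP x y) => [ay|ya|e]; last by rewrite e eqxx in n1y.
- by move/negP: p1; apply; apply/cwP; exists [:: x; M; y] => //; exact: iso_132.
- by move/negP: p2; apply; apply/cwP; exists [:: x; M; y] => //; exact: iso_231.
Qed.

Lemma third_conv x M b : P (x :: M :: b) -> uniq (x :: M :: b) -> x < M ->
  (forall y, y \in b -> y < M) -> (forall y, y \in b -> x < y) /\ Q b.
Proof.
move=> /and3P [p1 p2 p3] U xM HM.
move: (U) => /= /andP [/negP U1 _].
have xb : forall y, y \in b -> x < y.
  move=> y yb; case: (ltngtP x y) => [//|yx|e].
  - exfalso; move/negP: p3; apply; apply/cwP; exists [:: x; M; y].
    + by rewrite /= !eqxx sub1seq.
    + exact: iso_231 yx xM.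
  - by exfalso; apply: U1; rewrite e !in_cons yb !orbT.
split => //; apply/andP; split; apply/negP => /cwP [t ts tp].
- move/negP: p1; apply; apply/cwP; exists (x :: t).
  + rewrite -cat1s -[x :: M :: b]cat1s; apply: cat_subseq => //; exact: subseq_trans ts (subseq_cons _ _).
  + apply: iso_cons_intro; first by apply: iso_trans tp _.
    move/isoP: tp => [st _] j jl.
    have : nth 0 t j \in b by apply: (mem_subseq ts); apply: mem_nth; rewrite st.
    move/xb => h; have h' : (nth 0 t j < x) = false by apply/negbTE; rewrite -leqNgt ltnW.
    rewrite h h'; move: jl; by case: j {h h'} => [|[|[|]]].
- move/negP: p3; apply; have h : cw b [:: 2; 3; 1] by apply/cwP; exists t.
  apply: cw_sub h; apply: subseq_trans (subseq_cons _ M) (subseq_cons _ x).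
Qed.


Lemma count_bij (T U : eqType) (f : U -> T) (l1 : seq U) (l2 : seq T) (a : pred T) (b : pred U) :
  uniq l1 -> uniq l2 -> {in l1 &, injective f} ->
  (forall u, u \in l1 -> b u -> f u \in l2 /\ a (f u)) ->
  (forall t, t \in l2 -> a t -> exists2 u, u \in l1 & b u /\ t = f u) ->
  count a l2 = count b l1.
Proof.
move=> u1 u2 inj H1 H2.
rewrite -!size_filter -(size_map f [seq x <- l1 | b x]); apply: perm_size.
apply: uniq_perm; first exact: filter_uniq.
- rewrite map_inj_in_uniq; first exact: filter_uniq.
  by move=> x y; rewrite !mem_filter => /andP [_ xl] /andP [_ yl]; apply: inj.
- move=> t; rewrite mem_filter; apply/andP/mapP => [[ha tl]|[u]].
  + by have [u ul [bu ->]] := H2 t tl ha; exists u; rewrite // mem_filter bu.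
  + rewrite mem_filter => /andP [bu ul] ->; have [h1 h2] := H1 u ul bu; by split.
Qed.

Lemma count_split (T : Type) (a b : pred T) l :
  count a l = count (fun x => a x && b x) l + count (fun x => a x && ~~ b x) l.
Proof. elim: l => //= x l ->; case: (a x); case: (b x) => /=; lia. Qed.

Definition mx (X : seq nat) := foldr maxn 0 X.
Lemma mx_ge X y : y \in X -> y <= mx X.
Proof. elim: X => //= x X IH; rewrite in_cons => /orP [/eqP ->|/IH h]; lia. Qed.
Lemma mx_mem X : X != [::] -> mx X \in X.
Proof.
elim: X => //= x [|z X] IH _; first by rewrite /mx /= maxn0 mem_head.
move: IH; rewrite /mx /= => /(_ isT) h; rewrite in_cons.
case: (leqP x (maxn z (foldr maxn 0 X))) => c.
- by rewrite h orbT.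
- by rewrite eqxx.
Qed.

Definition mn (X : seq nat) := foldr minn (head 0 X) X.
Lemma mn_gen d X : (foldr minn d X \in d :: X) && all (fun y => foldr minn d X <= y) (d :: X).
Proof.
elim: X => /= [|x X /andP [IH1 /andP [IH2 IH3]]]; first by rewrite mem_head leqnn.
apply/andP; split.
- rewrite !in_cons; case: (leqP x (foldr minn d X)) => c.
  + by rewrite eqxx orbT.
  + move: IH1; rewrite in_cons => /orP [->//|->]; by rewrite !orbT.
- apply/andP; split; first lia. apply/andP; split; first lia.
  apply/allP => y yX; move/allP: IH3 => /(_ y yX); lia.
Qed.
Lemma mn_le X y : y \in X -> mn X <= y.
Proof.
case: X => // x X yX; have /andP [_ /allP h] := mn_gen x (x :: X).
by apply: h; rewrite in_cons yX orbT.
Qed.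
Lemma mn_mem X : X != [::] -> mn X \in X.
Proof.
case: X => // x X _; have /andP [h _] := mn_gen x (x :: X).
by move: h; rewrite /mn /= in_cons => /orP [/eqP ->|]; rewrite ?mem_head.
Qed.


Lemma ptrans (s1 s2 s3 : seq nat) : perm_eq s1 s2 -> perm_eq s2 s3 -> perm_eq s1 s3.
Proof. exact: perm_trans. Qed.

Lemma ltM_of X M a : uniq X -> (forall y, y \in X -> y <= M) ->
  perm_eq a (rem M X) -> forall y, y \in a -> y < M.
Proof.
move=> uX HX pa y ya; have : y \in rem M X by rewrite -(perm_mem pa).
rewrite (mem_rem_uniq _ uX) inE => /andP [yM yX]; have := HX y yX.
rewrite leq_eqVlt => /orP [/eqP e|//]; by rewrite e eqxx in yM.
Qed.

Lemma term_last (R : pred (seq nat)) X M : uniq X -> M \in X -> (forall y, y \in X -> y <= M) ->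
  (forall a, (forall y, y \in a -> y < M) -> R (rcons a M) = R a) ->
  count (fun s => R s && (last 0 s == M)) (permutations X) = count R (permutations (rem M X)).
Proof.
move=> uX MX HX HR.
apply: (count_bij (f := fun a => rcons a M)).
- exact: permutations_uniq.
- exact: permutations_uniq.
- by move=> a b _ _; apply: rcons_injl.
- move=> a; rewrite !mem_permutations => pa Ra; split.
  + rewrite perm_rcons; rewrite perm_sym; apply: ptrans (perm_to_rem MX) _; by rewrite perm_cons perm_sym.
  + by rewrite HR ?Ra ?last_rcons ?eqxx //; exact: ltM_of pa.
- move=> s; rewrite mem_permutations => ps /andP [Rs /eqP ls].
  case/lastP: s ps Rs ls => [|a z] ps Rs ls.
  + by move: MX; rewrite -(perm_mem ps).
  + rewrite last_rcons in ls; subst z.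
    have pa : perm_eq a (rem M X).
      rewrite -(perm_cons M); apply: ptrans _ (perm_to_rem MX); by rewrite -perm_rcons.
    exists a; first by rewrite mem_permutations.
    by rewrite -HR //; exact: ltM_of pa.
Qed.

Lemma term_head (R : pred (seq nat)) X M : uniq X -> M \in X -> (forall y, y \in X -> y <= M) ->
  1 < size X ->
  (forall a, (forall y, y \in a -> y < M) -> R (M :: a) = R a) ->
  count (fun s => (R s && ~~ (last 0 s == M)) && (head 0 s == M)) (permutations X)
   = count R (permutations (rem M X)).
Proof.
move=> uX MX HX sX HR.
apply: (count_bij (f := fun a => M :: a)).
- exact: permutations_uniq.
- exact: permutations_uniq.
- by move=> a b _ _ [].
- move=> a; rewrite !mem_permutations => pa Ra; split.
  + rewrite perm_sym; apply: ptrans (perm_to_rem MX) _; by rewrite perm_cons perm_sym.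
  + rewrite HR ?Ra ?eqxx ?andbT /=; last exact: ltM_of pa.
    have := perm_size pa; rewrite size_rem // => sa.
    case: a pa Ra sa => [|c a] pa Ra sa; first by exfalso; move: sa sX => /=; case: (size X) => [|[|k]].
    have := ltM_of uX HX pa (mem_last c a); by rewrite ltn_neqAle => /andP [].
- move=> s; rewrite mem_permutations => ps /andP [/andP [Rs _] /eqP hs].
  case: s ps Rs hs => [|x b] ps Rs /= hs.
  + by move: MX; rewrite -(perm_mem ps).
  + subst x; have pb : perm_eq b (rem M X).
      by rewrite -(perm_cons M); apply: ptrans _ (perm_to_rem MX).
    exists b; first by rewrite mem_permutations.
    by rewrite -HR //; exact: ltM_of pb.
Qed.

Lemma le_neq_lt (a b : nat) : a <= b -> a != b -> a < b.
Proof. by rewrite ltn_neqAle => -> ->. Qed.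

Lemma term_third X M x0 : uniq X -> M \in X -> (forall y, y \in X -> y <= M) ->
  x0 \in X -> x0 < M -> (forall y, y \in X -> x0 <= y) -> 2 < size X ->
  count (fun s => ((P s && ~~ (last 0 s == M)) && ~~ (head 0 s == M)) && (nth 0 s 1 == M))
     (permutations X) = count Q (permutations (rem M (rem x0 X))).
Proof.
move=> uX MX HX x0X x0M Hx0 sX.
have ux : uniq (rem x0 X) by apply: rem_uniq.
have MX' : M \in rem x0 X.
  by rewrite (mem_rem_uniq _ uX) inE MX andbT; apply/eqP => e; move: x0M; rewrite e ltnn.
have pX : perm_eq X [:: x0, M & rem M (rem x0 X)].
  apply: ptrans (perm_to_rem x0X) _; rewrite perm_cons; exact: perm_to_rem MX'.
have inX2 : forall y, y \in rem M (rem x0 X) -> x0 < y < M.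
  move=> y; rewrite (mem_rem_uniq _ ux) inE (mem_rem_uniq _ uX) inE => /andP [yM /andP [yx yX]].
  apply/andP; split; apply: le_neq_lt; rewrite ?HX ?Hx0 //; by rewrite eq_sym.
apply: (count_bij (f := fun b => [:: x0, M & b])).
- exact: permutations_uniq.
- exact: permutations_uniq.
- by move=> a b _ _ [].
- move=> b; rewrite !mem_permutations => pb Qb; split.
  + rewrite perm_sym; apply: ptrans pX _; by rewrite !perm_cons perm_sym.
  + have Hb : forall y, y \in b -> x0 < y < M by move=> y; rewrite (perm_mem pb); apply: inX2.
    rewrite P_third // eqxx andbT /=; apply/andP; split; last by rewrite neq_ltn x0M.
    have := perm_size pb; rewrite !size_rem // => sb.
    case: b pb Qb sb Hb => [|c b] pb Qb sb Hb; first by exfalso; move: sb sX => /=; case: (size X) => [|[|[|k]]].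
    have /Hb /andP [_ h] := mem_last c b; by rewrite neq_ltn h.
- move=> s; rewrite mem_permutations => ps.
  have us : uniq s by rewrite (perm_uniq ps).
  have Ms : M \in s by rewrite (perm_mem ps).
  case: s ps us Ms => [//|x [|z b]] ps us Ms.
  + move=> /andP [_ /eqP hM]; move: x0M; by rewrite -hM.
  + move=> /andP [/andP [/andP [Ps _] /= xM] /eqP zM]; subst z.
    have xX : x \in X by rewrite -(perm_mem ps) mem_head.
    have xltM : x < M by apply: le_neq_lt; rewrite ?HX.
    have HbM : forall y, y \in b -> y < M.
      move=> y yb; apply: le_neq_lt; first by apply: HX; rewrite -(perm_mem ps) !in_cons yb !orbT.
      apply/eqP => e; move: us => /= /and3P [_ + _]; by rewrite -e yb.
    have [xb Qb] := third_conv Ps us xltM HbM.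
    have e : x = x0.
      have : x0 \in [:: x, M & b] by rewrite (perm_mem ps).
      rewrite !in_cons => /orP [/eqP -> //|/orP [/eqP e|x0b]].
      * by move: x0M; rewrite e ltnn.
      * have := xb _ x0b; have := Hx0 _ xX; lia.
    subst x; exists b; last by split.
    rewrite mem_permutations -(perm_cons M) -(perm_cons x0).
    apply: ptrans ps _; exact: pX.
Qed.

Lemma term_zeroP X M : uniq X -> M \in X -> (forall y, y \in X -> y <= M) ->
  count (fun s => ((P s && ~~ (last 0 s == M)) && ~~ (head 0 s == M)) && ~~ (nth 0 s 1 == M))
     (permutations X) = 0.
Proof.
move=> uX MX HX; apply/eqP; rewrite -leqn0 leqNgt -has_count; apply/hasPn => s.
rewrite mem_permutations => ps.
have us : uniq s by rewrite (perm_uniq ps).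
have Ms : M \in s by rewrite (perm_mem ps).
have Hs : forall y, y \in s -> y <= M by move=> y; rewrite (perm_mem ps); apply: HX.
apply/negP; case: s ps us Ms Hs => [//|a1 [|a2 r]] ps us Ms Hs.
- by move: Ms; rewrite inE => /eqP ->; rewrite /= eqxx !andbF.
- move=> /andP [/andP [/andP [Ps nl] /= n1] /= n2].
  have Mr : M \in r by move: Ms; rewrite !in_cons eq_sym (negbTE n1) eq_sym (negbTE n2).
  case/splitPr: Mr ps us Ms Hs Ps nl => r1 r2 ps us Ms Hs Ps nl.
  case: r2 ps us Ms Hs Ps nl => [|y r2] ps us Ms Hs Ps nl.
  + by move: nl; rewrite /= last_cat /= eqxx.
  + have uM : M != y.
      move: us => /= /andP [_ /andP [_]]; rewrite cat_uniq => /and3P [_ _ /= /andP [h _]].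
      by apply/eqP => e; move: h; rewrite e mem_head.
    apply: (no_middle Ps (mem_head y r2) us).
    * by apply: le_neq_lt => //; apply: Hs; rewrite mem_head.
    * by apply: le_neq_lt => //; apply: Hs; rewrite !in_cons eqxx orbT.
    * apply: le_neq_lt; last by rewrite eq_sym.
      by apply: Hs; rewrite !in_cons mem_cat in_cons mem_head !orbT.
Qed.

Lemma term_zeroQ X M : uniq X -> M \in X -> (forall y, y \in X -> y <= M) ->
  count (fun s => (Q s && ~~ (last 0 s == M)) && ~~ (head 0 s == M)) (permutations X) = 0.
Proof.
move=> uX MX HX; apply/eqP; rewrite -leqn0 leqNgt -has_count; apply/hasPn => s.
rewrite mem_permutations => ps.
have us : uniq s by rewrite (perm_uniq ps).
have Ms : M \in s by rewrite (perm_mem ps).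
have Hs : forall y, y \in s -> y <= M by move=> y; rewrite (perm_mem ps); apply: HX.
apply/negP; case: s ps us Ms Hs => [//|a1 r] ps us Ms Hs.
move=> /andP [/andP [Qs nl] /= n1].
have Mr : M \in r by move: Ms; rewrite !in_cons eq_sym (negbTE n1).
case/splitPr: Mr ps us Ms Hs Qs nl => r1 r2 ps us Ms Hs Qs nl.
case: r2 ps us Ms Hs Qs nl => [|y r2] ps us Ms Hs Qs nl.
- by move: nl; rewrite /= last_cat /= eqxx.
- have uM : M != y.
    move: us => /= /andP [_]; rewrite cat_uniq => /and3P [_ _ /= /andP [h _]].
    by apply/eqP => e; move: h; rewrite e mem_head.
  apply: (Q_no_middle Qs (mem_head y r2) us).
  + by apply: le_neq_lt => //; apply: Hs; rewrite mem_head.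
  + apply: le_neq_lt; last by rewrite eq_sym.
    by apply: Hs; rewrite !in_cons mem_cat in_cons mem_head !orbT.
Qed.


Lemma cw_size w p : cw w p -> size p <= size w.
Proof. by move=> /cwP [t ts /isoP [<- _]]; apply: size_subseq. Qed.

Lemma count_all_perm (R : pred (seq nat)) X : uniq X ->
  (forall s, size s = size X -> R s) -> count R (permutations X) = (size X)`!.
Proof.
move=> uX H; rewrite -(size_permutations uX) -count_predT; apply: eq_in_count => s.
by rewrite mem_permutations => ps; apply: H; apply: perm_size.
Qed.

Lemma countQ n X : uniq X -> size X = n.+1 -> count Q (permutations X) = 2 ^ n.
Proof.
elim: n X => [|n IH] X uX sX.
- rewrite count_all_perm //; first by rewrite sX.
  move=> s ss; apply/andP; split; apply/negP => /cw_size; by rewrite ss sX.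
- have Xn : X != [::] by case: X sX uX.
  have MX := mx_mem Xn; have HX := @mx_ge X.
  rewrite (count_split Q (fun s => last 0 s == mx X)) term_last //; last first.
    move=> a Ha; apply/idP/idP; [exact: Q_sub (subseq_rcons a _) | exact: Q_rcons].
  rewrite (count_split (fun s => Q s && ~~ (last 0 s == mx X)) (fun s => head 0 s == mx X)).
  rewrite term_head //; first last.
  + move=> a Ha; apply/idP/idP; [exact: Q_sub (subseq_cons a _) | exact: Q_cons].
  + by rewrite sX.
  rewrite term_zeroQ // IH ?rem_uniq // ?size_rem // ?sX // expnS; lia.
Qed.

Lemma countP n X : uniq X -> size X = n.+2 -> 2 * count P (permutations X) = (n + 4) * 2 ^ n.
Proof.
elim: n X => [|n IH] X uX sX.
- rewrite count_all_perm //; first by rewrite sX.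
  move=> s ss; apply/and3P; split; apply/negP => /cw_size; by rewrite ss sX.
- have Xn : X != [::] by case: X sX uX.
  have MX := mx_mem Xn; have HX := @mx_ge X.
  have x0X := mn_mem Xn; have Hx0 := @mn_le X.
  have x0M : mn X < mx X.
    apply: le_neq_lt; first exact: HX.
    apply/eqP => e; case: X uX sX Xn MX HX x0X Hx0 e => [|a [|b X]] //= uX sX _ MX HX x0X Hx0 e.
    move: uX => /andP [+ _]; rewrite in_cons => /norP [/eqP []].
    have := HX a; have := HX b; have := Hx0 a; have := Hx0 b; rewrite !in_cons !eqxx !orbT /=.
    rewrite e; lia.
  rewrite (count_split P (fun s => last 0 s == mx X)) term_last //; last first.
    move=> a Ha; apply/idP/idP; [exact: P_sub (subseq_rcons a _) | exact: P_rcons].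
  rewrite (count_split (fun s => P s && ~~ (last 0 s == mx X)) (fun s => head 0 s == mx X)).
  rewrite term_head //; first last.
  + move=> a Ha; apply/idP/idP; [exact: P_sub (subseq_cons a _) | exact: P_cons].
  + by rewrite sX.
  rewrite (count_split (fun s => (P s && ~~ (last 0 s == mx X)) && ~~ (head 0 s == mx X))
                       (fun s => nth 0 s 1 == mx X)).
  rewrite term_zeroP // (term_third (x0 := mn X)) //; last by rewrite sX.
  rewrite (countQ (n := n)); last first.
  + rewrite size_rem; last by rewrite (mem_rem_uniq _ uX) inE MX andbT; apply/eqP => e; move: x0M; rewrite e ltnn.
    by rewrite size_rem // sX.
  + by rewrite !rem_uniq.
  have := IH (rem (mx X) X) (rem_uniq _ uX); rewrite size_rem // sX => /(_ erefl) h.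
  rewrite expnS; nia.
Qed.


Lemma subseq_idx (w : seq nat) d idx : sorted ltn idx ->
  all (fun i => d <= i < d + size w) idx ->
  subseq (map (fun i => nth 0 w (i - d)) idx) w.
Proof.
elim: w d idx => [|x w IH] d [|i idx] //.
- by move=> _ /andP [/andP [h1 h2] _]; exfalso; move: h1 h2 => /=; lia.
- move=> so /andP [/andP [h1 h2] ha].
  have sz : size (x :: w) = (size w).+1 by [].
  rewrite sz in h2 ha.
  have hall : all (ltn i) idx by apply: (order_path_min ltn_trans).
  case: (ltngtP i d) => c; first by exfalso; lia.
  + have -> : [seq nth 0 (x :: w) (i0 - d) | i0 <- i :: idx]
            = [seq nth 0 w (i0 - d.+1) | i0 <- i :: idx].
      apply/eq_in_map => j; rewrite in_cons => /orP [/eqP ->|jm].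
      * by have -> : i - d = (i - d.+1).+1 by lia.
      * move/allP: hall => /(_ j jm) hj.
        by have -> : j - d = (j - d.+1).+1 by move: hj => /= hj; lia.
    apply: subseq_trans _ (subseq_cons w x); apply: IH => //=.
    apply/andP; split; first by apply/andP; split; lia.
    apply/allP => j jm; move/allP: ha => /(_ j jm) /andP [j1 j2].
    move/allP: hall => /(_ j jm) /= hj; apply/andP; split; lia.
  + subst i; rewrite [map _ _]/= subnn /= eqxx.
    have -> : [seq nth 0 (x :: w) (i0 - d) | i0 <- idx] = [seq nth 0 w (i0 - d.+1) | i0 <- idx].
      apply/eq_in_map => j jm; move/allP: hall => /(_ j jm) hj.
      by have -> : j - d = (j - d.+1).+1 by move: hj => /= hj; lia.
    apply: IH; first exact: path_sorted so.
    apply/allP => j jm; move/allP: ha => /(_ j jm) /andP [j1 j2].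
    move/allP: hall => /(_ j jm) /= hj; apply/andP; split; lia.
Qed.

Lemma mask_idx (w : seq nat) m : size m = size w ->
  mask m w = map (nth 0 w) [seq i <- iota 0 (size w) | nth false m i].
Proof.
elim: w m => [|x w IH] [|b m] //= [sm].
rewrite -add1n iotaDl filter_map (IH m sm); case: b => /=; rewrite -map_comp //.
Qed.


Definition word n (pi : 'S_n) : seq nat := [seq val (pi i) | i <- enum 'I_n].

Lemma size_word n (pi : 'S_n) : size (word pi) = n.
Proof. by rewrite size_map size_enum_ord. Qed.

Lemma nth_word n (pi : 'S_n) (i : 'I_n) : nth 0 (word pi) i = pi i.
Proof. by rewrite /word (nth_map i) ?size_enum_ord // nth_ord_enum. Qed.

Lemma nth_enum_ordinal k (i0 : 'I_k) i (il : i < k) : nth i0 (enum 'I_k) i = Ordinal il.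
Proof. by apply: val_inj; rewrite /= nth_enum_ord. Qed.

Lemma nth_map_enum k (g : 'I_k -> nat) i (il : i < k) :
  nth 0 [seq g a | a <- enum 'I_k] i = g (Ordinal il).
Proof. by rewrite (nth_map (Ordinal il)) ?size_enum_ord // nth_enum_ordinal. Qed.

Lemma contains_cw n (pi : 'S_n) tau : contains pi tau = cw (word pi) tau.
Proof.
apply/existsP/cwP.
- move=> [f]; rewrite /occurrence => /forallP occ.
  pose idx := [seq val (f a) | a <- enum 'I_(size tau)].
  exists [seq val (pi (f a)) | a <- enum 'I_(size tau)].
  + have -> : [seq val (pi (f a)) | a <- enum 'I_(size tau)]
              = map (fun i => nth 0 (word pi) (i - 0)) idx.
      rewrite /idx -map_comp; apply: eq_map => a /=; rewrite subn0.
      exact: (esym (nth_word pi (f a))).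
    apply: subseq_idx.
    * apply/(sortedP 0) => i; rewrite size_map size_enum_ord => il.
      rewrite /idx (nth_map_enum _ il) (nth_map_enum _ (ltnW il)).
      by have /forallP /(_ (Ordinal il)) /andP [/implyP h _] := occ (Ordinal (ltnW il)); apply: h.
    * apply/allP => j /mapP [a _ ->]; by rewrite add0n size_word ltn_ord.
  + apply/isoP; split; first by rewrite size_map size_enum_ord.
    move=> i j il jl; rewrite (nth_map_enum _ il) (nth_map_enum _ jl).
    by have /forallP /(_ (Ordinal jl)) /andP [_ /eqP h] := occ (Ordinal il).
- move=> [t ts tp]; case/subseqP: ts => m sm tE.
  rewrite mask_idx // in tE.
  set idx := [seq i <- iota 0 (size (word pi)) | nth false m i] in tE.
  have so : sorted ltn idx by apply: sorted_filter; [exact: ltn_trans | exact: iota_ltn_sorted].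
  have sidx : size idx = size tau by move/isoP: tp => [<- _]; rewrite tE size_map.
  have H : forall a : 'I_(size tau), nth 0 idx a < n.
    move=> a; have : nth 0 idx a \in idx by apply: mem_nth; rewrite sidx.
    by rewrite mem_filter mem_iota size_word => /andP [_].
  exists [ffun a => Ordinal (H a)]; apply/forallP => a; apply/forallP => b; rewrite !ffunE /=.
  apply/andP; split.
  + apply/implyP => ab; apply: (sorted_ltn_nth ltn_trans 0 so) => //; by rewrite inE sidx.
  + have e : forall c : 'I_(size tau), val (pi (Ordinal (H c))) = nth 0 t c.
      move=> c; rewrite tE (nth_map 0) ?sidx //; exact: (esym (nth_word pi (Ordinal (H c)))).
    rewrite !e; move/isoP: tp => [_ Hi]; by rewrite Hi.
Qed.

Lemma card_word n (R : pred (seq nat)) :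
  #|[set pi : 'S_n | R (word pi)]| = count R (permutations (iota 0 n)).
Proof.
rewrite cardsE cardE /enum_mem size_filter -enumT.
symmetry; apply: (count_bij (f := @word n)).
- exact: enum_uniq.
- exact: permutations_uniq.
- move=> p1 p2 _ _ e; apply/permP => i; apply: val_inj.
  have := nth_word p1 i; rewrite e nth_word => h; exact: (esym h).
- move=> p _ Rp; split => //; rewrite mem_permutations.
  apply: uniq_perm; last first.
  + move=> x; rewrite mem_iota add0n /=; apply/mapP/idP => [[i _ ->]|xn].
    * exact: ltn_ord.
    * exists ((p^-1)%g (Ordinal xn)); first by rewrite mem_enum.
      by rewrite permKV.
  + exact: iota_uniq.
  + rewrite map_inj_uniq ?enum_uniq // => i j /val_inj; exact: perm_inj.
- move=> s; rewrite mem_permutations => ps Rs.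
  have ss : size s = n by rewrite (perm_size ps) size_iota.
  have us : uniq s by rewrite (perm_uniq ps) iota_uniq.
  have H : forall i : 'I_n, nth 0 s i < n.
    move=> i; have : nth 0 s i \in s by apply: mem_nth; rewrite ss.
    by rewrite (perm_mem ps) mem_iota.
  have ginj : injective (fun i : 'I_n => Ordinal (H i)).
    move=> i j [] /eqP; rewrite nth_uniq ?ss // => /eqP; exact: val_inj.
  have e : word (perm ginj) = s.
    apply: (@eq_from_nth _ 0); first by rewrite size_word ss.
    move=> i; rewrite size_word => il.
    by rewrite (nth_word _ (Ordinal il)) permE.
  exists (perm ginj); first by rewrite mem_enum.
  split; last by rewrite e.
  by change (R (word (perm ginj))); rewrite e.
Qed.

Unset Implicit Arguments.
Local Open Scope ring_scope.
Import GRing.Theory Num.Theory.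

Theorem corollary3p14 (n : nat) : (2 <= n)%N ->
  (#|[set pi : 'S_n | [&& avoids pi [:: 1; 2; 4; 3]%N,
                          avoids pi [:: 2; 1; 4; 3]%N &
                          avoids pi [:: 2; 3; 1]%N]]|%:R : rat)
  = (n + 2)%:R * (2%:R : rat) ^ (n%:Z - 3).
Proof.
move=> n2.
have -> : [set pi : 'S_n | [&& avoids pi [:: 1; 2; 4; 3]%N,
                          avoids pi [:: 2; 1; 4; 3]%N &
                          avoids pi [:: 2; 3; 1]%N]] = [set pi | P (word pi)].
  by apply/setP => pi; rewrite !inE /avoids !contains_cw.
rewrite card_word.
case: n n2 => [|[|m]] // _.
have := countP (n:=m) (iota_uniq 0 m.+2) (size_iota 0 m.+2).
move: (count _ _) => c h.
have -> : (m.+2%:Z - 3 = m%:Z - 1)%R by rewrite -addn2 PoszD; ring.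
rewrite expfzDr ?pnatr_eq0 //.
rewrite -exprnP exprN1.
have h' : (c%:R : rat) = ((m + 4) * 2 ^ m)%N%:R / 2.
  by rewrite -h natrM; field.
rewrite h' !natrM natrX !natrD; by field.
Qed.
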